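(* Let $\{\xi_j\}$ be an orthonormal basis of internal states and let $$|\psi\rangle=\hat a_0^\dagger[\xi_{i_0}]\cdots\hat a_{n-1}^\dagger[\xi_{i_{n-1}}]|\vec0\rangle$$ be an input state of $n$ photons in $n$ modes (one per mode) such that for some $r$, $\langle\xi_{i_r}|\xi_{i_j}\rangle=0$ for all $j\ne r$. Then the probability that the $n$-mode Fourier interferometer $F_n$ applied to $|\psi\rangle$, followed by photon-number-resolving detection on all $n$ output modes (insensitive to internal states), yields a valid pattern is exactly $1/n$.
   Context: $\hat a_i^\dagger[\xi]$ creates a photon in external mode $i\in\{0,\dots,n-1\}$ with internal state $\xi$. The Fourier interferometer acts on external modes only: $\hat a_r^\dagger[\xi]\mapsto\frac1{\sqrt n}\sum_{j=0}^{n-1}\omega^{-rj}\hat a_j^\dagger[\xi]$ with $\omega=e^{2\pi i/n}$. A measured occupation pattern $(s_0,\dots,s_{n-1})$ ($s_i$ = number of photons in mode $i$) is valid if $\sum_{i=0}^{n-1}i\,s_i\equiv0\pmod n$. *)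

(* Defs.v *)
From HB Require Import structures.
From mathcomp Require Import all_boot all_order all_algebra.
From mathcomp Require Import complex.
From mathcomp Require Import reals trigo.
Set Implicit Arguments. Unset Strict Implicit. Unset Printing Implicit Defensive.
Import Order.TTheory GRing.Theory Num.Theory.
Local Open Scope ring_scope.
Local Open Scope complex_scope.

Definition omega (R : realType) (n : nat) : R[i] :=
  (cos (2 * pi / n%:R)) +i* (sin (2 * pi / n%:R)).

(* Fourier interferometer: a_r^dag |-> sum_j U j r a_j^dag,
   U j r = omega^{-rj} / sqrt n. *)
Definition fourierU (R : realType) (n : nat) (j r : 'I_n) : R[i] :=
  ((Num.sqrt (n%:R : R))^-1)%:C * (omega R n) ^- (r * j).

(* Orthonormal basis of internal states indexed by K: <xi_a|xi_b> = delta_ab *)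
Definition basis_ip (R : realType) (K : finType) (a b : K) : R[i] :=
  (a == b)%:R.

(* Occupation numbers (output mode l, internal label k) produced when the photon
   of input mode j goes to output mode f j (it keeps its internal label i j). *)
Definition occ (n : nat) (K : finType) (i : 'I_n -> K) (f : 'I_n -> 'I_n)
  (lk : 'I_n * K) : nat :=
  #|[set j : 'I_n | (f j == lk.1) && (i j == lk.2)]|.

(* Output state:  prod_j (sum_l U l j a_{l, i j}^dag) |0>
   = sum_m coef m * prod_{l,k} (a_{l,k}^dag)^{m(l,k)} |0>,
   with coef m = sum_{f : occ f = m} prod_j U (f j) j.
   Fock basis states m are occupation functions (each entry <= n). *)
Definition out_coef (C : nzRingType) (n : nat) (K : finType)
  (U : 'I_n -> 'I_n -> C) (i : 'I_n -> K) (m : {ffun 'I_n * K -> 'I_n.+1}) : C :=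
  \sum_(f : {ffun 'I_n -> 'I_n} | [forall lk, occ i f lk == m lk :> nat])
     \prod_(j < n) U (f j) j.

(* Probability of the Fock state m: |coef m|^2 * prod m(l,k)!  (since
   || prod (a^dag)^m |0> ||^2 = prod m!). *)
Definition fock_prob (R : realType) (n : nat) (K : finType)
  (U : 'I_n -> 'I_n -> R[i]) (i : 'I_n -> K) (m : {ffun 'I_n * K -> 'I_n.+1}) : R[i] :=
  `|out_coef U i m| ^+ 2 * (\prod_(lk : 'I_n * K) (nat_of_ord (m lk))`!)%:R.

Definition pattern (n : nat) (K : finType) (m : {ffun 'I_n * K -> 'I_n.+1})
  (l : 'I_n) : nat := \sum_(k : K) nat_of_ord (m (l, k)).

Definition valid_pattern (n : nat) (s : 'I_n -> nat) : bool :=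
  ((\sum_(l < n) l * s l) %% n == 0)%N.

Definition prob_valid (R : realType) (n : nat) (K : finType)
  (U : 'I_n -> 'I_n -> R[i]) (i : 'I_n -> K) : R[i] :=
  \sum_(m : {ffun 'I_n * K -> 'I_n.+1} | valid_pattern (pattern m)) fock_prob U i m.

Arguments fourierU R n : clear implicits.
Arguments basis_ip R K : clear implicits.

(* Main.v *)
Require Import Defs.
From HB Require Import structures.
From mathcomp Require Import all_boot all_order all_algebra all_fingroup.
From mathcomp Require Import complex.
From mathcomp Require Import reals trigo.
From mathcomp Require Import ring lra.
Import Order.TTheory GRing.Theory Num.Theory.
Set Implicit Arguments. Unset Strict Implicit. Unset Printing Implicit Defensive.

Section Comb.
Variables (T D : finType).

Definition fib (A : {set T}) (phi : T -> D) (d : D) := #|[set x in A | phi x == d]|.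

Definition Sset (A : {set T}) (phi psi : T -> D) :=
  [set s : {perm T} | perm_on A s && [forall x in A, phi (s x) == psi x]].

Lemma fib_tperm (A : {set T}) (phi : T -> D) a c d : a \in A -> c \in A ->
  fib (A :\ a) (fun x => phi (tperm c a x)) d = fib A phi d - (phi c == d).
Proof.
move=> aA cA; rewrite /fib.
have -> : [set x in A :\ a | phi (tperm c a x) == d] =
          tperm c a @^-1: [set x in A :\ c | phi x == d].
  apply/setP => x; rewrite !inE.
  case: (tpermP c a x) => [->|->|/eqP xc /eqP xa].
  - by rewrite eq_sym cA aA.
  - by rewrite !eqxx.
  - by rewrite xa xc.
rewrite card_preimset; last exact: perm_inj.
rewrite (cardsD1 c [set x in A | phi x == d]) inE cA /=.
have -> : [set x in A | phi x == d] :\ c = [set x in A :\ c | phi x == d].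
  by apply/setP => x; rewrite !inE andbA.
by rewrite addKn.
Qed.

End Comb.

Section Comb2.
Variables (T D : finType).
Local Open Scope group_scope.

Lemma perm_on_split (A : {set T}) (s : {perm T}) a c : a \in A -> c \in A ->
  perm_on A s && (s a == c) = perm_on (A :\ a) (s * tperm c a).
Proof.
move=> aA cA; apply/idP/idP.
- case/andP=> pA /eqP sac; apply/subsetP => x; rewrite inE permM => hx.
  rewrite !inE; have [xa|xa] := eqVneq x a.
    by move: hx; rewrite xa sac tpermL eqxx.
  rewrite /=; apply: contraR hx => xA.
  rewrite (out_perm pA xA) tpermD // ?eqxx //.
    by apply: contraNneq xA => <-.
  by rewrite eq_sym.
- move=> pA'.
  have sE : s = (s * tperm c a) * tperm c a by rewrite -mulgA tperm2 mulg1.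
  have saE : s a = c.
    by rewrite sE permM (out_perm pA') ?tpermR // !inE eqxx.
  rewrite saE eqxx andbT; apply/subsetP => x; rewrite inE; apply: contraR => xA.
  rewrite sE permM (out_perm pA') ?inE ?(negbTE xA) ?andbF //.
  rewrite tpermD //; [apply: contraNneq xA => <- | apply: contraNneq xA => <-] => //.
Qed.

Lemma Sset_split (A : {set T}) (phi psi : T -> D) a : a \in A ->
  #|Sset A phi psi| = \sum_(c in A | phi c == psi a)
      #|Sset (A :\ a) (fun x => phi (tperm c a x)) psi|.
Proof.
move=> aA; rewrite -sum1_card.
rewrite (partition_big (fun s : {perm T} => s a) (fun c => (c \in A) && (phi c == psi a))) /=; last first.
  move=> s; rewrite inE => /andP[pA /forall_inP H].
  by rewrite (perm_closed _ pA) aA H.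
apply: eq_bigr => c /andP[cA /eqP phic].
have hinj : injective (fun s : {perm T} => s * tperm c a).
  by move=> s1 s2 /(congr1 (fun s => s * tperm c a)); rewrite -!mulgA tperm2 !mulg1.
rewrite -(card_preimset _ hinj) -sum1_card; apply: eq_bigl.
  move=> s; rewrite !inE -andbA [_ && (s a == c)]andbC andbA perm_on_split //.
  apply: andb_id2l => pA'.
  have saE : s a = c.
    have := pA'; rewrite -perm_on_split // => /andP[_ /eqP] //.
  apply/forall_inP/forall_inP => H x.
  - by rewrite !inE permM tpermK => /andP[_ xA]; exact: H.
  - move=> xA; have [->|xa] := eqVneq x a; first by rewrite saE phic.
    by have := H x; rewrite !inE xa xA permM tpermK; apply.
Qed.
End Comb2.

Section Comb3.
Variables (T D : finType).
Local Open Scope group_scope.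

Lemma fibD1 (A : {set T}) (psi : T -> D) a d : a \in A ->
  fib (A :\ a) psi d = fib A psi d - (psi a == d).
Proof.
move=> aA; rewrite -(fib_tperm _ _ aA aA); apply: eq_card => x.
by rewrite !inE tperm1 perm1.
Qed.

Lemma card_Sset (A : {set T}) (phi psi : T -> D) :
  #|Sset A phi psi| = if [forall d, fib A phi d == fib A psi d]
                      then (\prod_d (fib A phi d)`!)%N else 0.
Proof.
have [m] := ubnP #|A|; elim: m A phi => // m IH A phi hA.
case: (set_0Vmem A) => [->|[a aA]].
  have -> : [forall d, fib set0 phi d == fib set0 psi d].
    by apply/forallP => d; rewrite /fib !(eq_card (B := pred0)) // => x; rewrite !inE.
  rewrite big1; last by move=> d _; rewrite /fib (eq_card (B := pred0)) ?card0 // => x; rewrite !inE.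
  have -> : 1%N = #|@set0 T|`! by rewrite cards0.
  rewrite -card_perm; apply: eq_card => s; rewrite !inE.
  by apply: andb_idr => _; apply/forall_inP => x; rewrite inE.
rewrite (Sset_split _ _ aA).
have hA' : #|A :\ a| < m.
  by move: hA; rewrite (cardsD1 a A) aA.
set d0 := psi a.
have Hk' : 0 < fib A psi d0.
  by apply/card_gt0P; exists a; rewrite !inE aA eqxx.
set X := if [forall d, fib A phi d - (d0 == d) == fib A psi d - (d0 == d)]
         then (\prod_d (fib A phi d - (d0 == d))`!)%N else 0.
rewrite (eq_bigr (fun _ => X)); last first.
  move=> c /andP[cA /eqP phic]; rewrite IH //.
  rewrite /X; congr (if _ then _ else _).
    by apply: eq_forallb => d; rewrite (fib_tperm _ _ aA cA) fibD1 // phic.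
  by apply: eq_bigr => d _; rewrite (fib_tperm _ _ aA cA) phic.
rewrite sum_nat_const.
have -> : #|[pred c in A | phi c == d0]| = fib A phi d0.
  by apply: eq_card => x; rewrite !inE.
case Ek: (fib A phi d0) => [|k].
  case: forallP => // H; have := H d0; rewrite Ek => /eqP E.
  by move: Hk'; rewrite -E.
rewrite /X; have -> : [forall d, fib A phi d - (d0 == d) == fib A psi d - (d0 == d)] =
          [forall d, fib A phi d == fib A psi d].
  apply: eq_forallb => d; have [<-|_] := eqVneq d0 d; last by rewrite !subn0.
  by rewrite Ek -(eqn_add2r 1) !subnK.
case: forallP => // _.
rewrite (bigD1 d0) //= [in RHS](bigD1 d0) //= eqxx Ek subn1 /= mulnA -factS.
  congr (_ * _)%N; apply: eq_bigr => d; rewrite eq_sym => /negbTE ->; by rewrite subn0.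
by rewrite muln0.
Qed.
End Comb3.

Local Open Scope ring_scope.
Local Open Scope complex_scope.

Lemma mulcE (R : realType) (a b c d : R) :
  (a +i* b) * (c +i* d) = (a * c - b * d) +i* (a * d + b * c).
Proof. by []. Qed.

Lemma omegaX (R : realType) (n k : nat) :
  omega R n ^+ k = cos (k%:R * (2 * pi / n%:R)) +i* sin (k%:R * (2 * pi / n%:R)).
Proof.
rewrite /omega; set th := 2 * pi / n%:R.
elim: k => [|k IH]; first by rewrite expr0 !mul0r cos0 sin0.
rewrite exprS IH mulcE -[k.+1]addn1 natrD mulrDl mul1r cosD sinD.
congr (_ +i* _).
  by rewrite (mulrC (cos th)) (mulrC (sin th)).
by rewrite (mulrC (cos th)) (mulrC (sin th)) addrC.
Qed.

Lemma omega_n (R : realType) (n : nat) : (0 < n)%N -> omega R n ^+ n = 1.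
Proof.
move=> n0; rewrite omegaX mulrCA divff ?pnatr_eq0 -?lt0n // mulr1.
by rewrite mulr_natl cos2pi sin2pi.
Qed.

Lemma omega_neq1 (R : realType) (n k : nat) : (0 < k < n)%N -> omega R n ^+ k != 1.
Proof.
case/andP=> k0 kn; rewrite omegaX; apply/negP => /eqP [] hc _.
pose x : R := k%:R * pi / n%:R.
have n0 : (0 < n%:R :> R) by rewrite ltr0n; apply: leq_trans kn.
have hx : 0 < x < pi.
  rewrite /x divr_gt0 // ?mulr_gt0 ?ltr0n ?pi_gt0 //=.
  rewrite ltr_pdivrMr // mulrC ltr_pM2l ?pi_gt0 // ltr_nat //.
have e : k%:R * (2 * pi / n%:R) = x *+ 2.
  by rewrite /x -[_ *+ 2]mulr_natr; ring.
move: hc; rewrite e cos_mulr2n cos2sin2.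
have := sin_gt0_pi hx => sp.
move=> h; have h2 : sin x ^+ 2 = 0 by move: h; rewrite -mulr_natr; lra.
by move: h2 => /eqP; rewrite expf_eq0 /= gt_eqF.
Qed.

Lemma omega_prim (R : realType) (n : nat) : (0 < n)%N -> n.-primitive_root (omega R n).
Proof.
move=> n0; rewrite /primitive_root_of_unity n0 /=; apply/forallP => i.
rewrite unity_rootE; have [-> | ne] := eqVneq i.+1 n; first by rewrite omega_n // !eqxx.
rewrite eqbF_neg; apply: omega_neq1; apply/andP; split => //; rewrite ltn_neqAle ne; exact: ltn_ord i.
Qed.

Lemma sum_prim (F : fieldType) (z : F) (n a : nat) : n.-primitive_root z ->
  \sum_(l < n) (z ^+ a) ^+ l = if (a %% n == 0)%N then n%:R else 0.
Proof.
move=> P; have := eq_prim_root_expr P a 0; rewrite expr0 mod0n => <-.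
case: eqP => [->|/eqP ne].
  by rewrite (eq_bigr (fun _ => 1)) ?sumr_const ?card_ord // => l _; rewrite expr1n.
have : (z ^+ a) ^+ n - 1 = 0 by rewrite -exprM mulnC exprM (prim_expr_order P) expr1n subrr.
rewrite subrX1 => /eqP; rewrite mulf_eq0 subr_eq0 (negbTE ne) /=; by move/eqP.
Qed.

Lemma conj_omega (R : realType) (n : nat) : (omega R n)^*%R = (omega R n)^-1.
Proof.
have h : omega R n * (omega R n)^*%R = 1.
  rewrite /omega /= mulcE; apply/eqP; rewrite eq_complex /=.
  by rewrite mulrN opprK -!expr2 cos2Dsin2 eqxx /= mulrN mulrC addNr.
have nz : omega R n != 0 by apply: contra_eq_neq h => ->; rewrite mul0r eq_sym oner_neq0.
by rewrite -[LHS]mul1r -(mulVf nz) -mulrA h mulr1.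
Qed.

Local Close Scope complex_scope.

Definition occf (n : nat) (K : finType) (i : 'I_n -> K) (f : {ffun 'I_n -> 'I_n}) :
  {ffun 'I_n * K -> 'I_n.+1} := [ffun lk => inord (occ i f lk)].

Definition Pf (R : realType) (n : nat) (U : 'I_n -> 'I_n -> R[i]) (f : 'I_n -> 'I_n) : R[i] :=
  \prod_(j < n) U (f j) j.

Definition comp_perm (n : nat) (f : {ffun 'I_n -> 'I_n}) (s : {perm 'I_n}) :
  {ffun 'I_n -> 'I_n} := [ffun j => f (s j)].

Definition stab (n : nat) (K : finType) (i : 'I_n -> K) (s : {perm 'I_n}) :=
  [forall x, i (s x) == i x].

Lemma occ_le (n : nat) (K : finType) (i : 'I_n -> K) (f : 'I_n -> 'I_n) lk :
  (occ i f lk <= n)%N.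
Proof. by rewrite /occ (leq_trans (max_card _)) // card_ord. Qed.

Lemma occfE (n : nat) (K : finType) (i : 'I_n -> K) (f : {ffun 'I_n -> 'I_n}) lk :
  nat_of_ord (occf i f lk) = occ i f lk.
Proof. by rewrite ffunE inordK // ltnS occ_le. Qed.

Lemma occ_cond (n : nat) (K : finType) (i : 'I_n -> K) (f : {ffun 'I_n -> 'I_n}) (m : {ffun 'I_n * K -> 'I_n.+1}) :
  [forall lk, occ i f lk == m lk :> nat] = (occf i f == m).
Proof.
apply/forallP/eqP => [H|<- lk]; last by rewrite occfE.
by apply/ffunP => lk; apply/val_inj; rewrite /= occfE; apply/eqP.
Qed.

Lemma fock_probE (R : realType) (n : nat) (K : finType) (U : 'I_n -> 'I_n -> R[i])
  (i : 'I_n -> K) m :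
  fock_prob U i m = \sum_(f | occf i f == m) \sum_(g | occf i g == m)
     Pf U f * (Pf U g)^* * (\prod_(lk : 'I_n * K) (nat_of_ord (m lk))`!)%:R.
Proof.
rewrite /fock_prob normCK /out_coef (eq_bigl _ _ (occ_cond i ^~ m)) rmorph_sum.
by rewrite big_distrlr /= mulr_suml; apply: eq_bigr => f _; rewrite mulr_suml; 
   apply: eq_bigr => g _; rewrite rmorph_prod.
Qed.

Lemma pattern_occf (n : nat) (K : finType) (i : 'I_n -> K) (f : {ffun 'I_n -> 'I_n}) l :
  pattern (occf i f) l = (\sum_(j | f j == l) 1)%N.
Proof.
rewrite /pattern (partition_big i predT) //=; apply: eq_bigr => k _.
by rewrite occfE /occ -sum1_card; apply: eq_bigl => j; rewrite !inE.
Qed.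

Lemma valid_occf (n : nat) (K : finType) (i : 'I_n -> K) (f : {ffun 'I_n -> 'I_n}) :
  valid_pattern (pattern (occf i f)) = ((\sum_j f j) %% n == 0)%N.
Proof.
rewrite /valid_pattern; congr (_ %% _ == _)%N.
rewrite [RHS](partition_big f predT) //=; apply: eq_bigr => l _.
rewrite pattern_occf big_distrr /= muln1; apply: eq_bigr => j /eqP -> //.
Qed.

Lemma fib_occ (n : nat) (K : finType) (i : 'I_n -> K) (f : {ffun 'I_n -> 'I_n}) lk :
  fib [set: 'I_n] (fun j => (f j, i j)) lk = occf i f lk.
Proof.
rewrite occfE /fib /occ; apply: eq_card => j; rewrite !inE.
by case: lk => l k; rewrite xpair_eqE.
Qed.

Lemma card_stab (n : nat) (K : finType) (i : 'I_n -> K) (f g : {ffun 'I_n -> 'I_n}) :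
  #|[pred s : {perm 'I_n} | stab i s && (g == comp_perm f s)]| =
  if occf i g == occf i f then (\prod_(lk : 'I_n * K) (nat_of_ord (occf i f lk))`!)%N else 0%N.
Proof.
rewrite (@eq_card _ _ (Sset [set: 'I_n] (fun j => (f j, i j)) (fun j => (g j, i j)))); last first.
  move=> s; rewrite !inE; have -> : perm_on [set: 'I_n] s by apply/subsetP => x _; rewrite inE.
  rewrite /=.
  apply/idP/idP.
  - case/andP=> /forallP st /eqP ->; apply/forall_inP => x _.
    by rewrite ffunE xpair_eqE eqxx st.
  - move/forall_inP => H; apply/andP; split.
      by apply/forallP => x; have /andP[_ ->] := H x (in_setT x).
    apply/eqP/ffunP => x; rewrite ffunE; apply/eqP; rewrite eq_sym.
    by have /andP[-> _] := H x (in_setT x).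
rewrite card_Sset.
have -> : [forall d, fib [set: 'I_n] (fun j => (f j, i j)) d ==
                     fib [set: 'I_n] (fun j => (g j, i j)) d] = (occf i g == occf i f).
  apply/forallP/eqP => [H|E]; last by move=> d; rewrite !fib_occ E.
  apply/ffunP => lk; apply/val_inj; rewrite /= -!fib_occ; apply/esym/eqP; exact: H.
by case: eqP => // _; apply: eq_bigr => lk _; rewrite fib_occ.
Qed.

Lemma stepA (R : realType) (n : nat) (K : finType) (U : 'I_n -> 'I_n -> R[i])
  (i : 'I_n -> K) :
  prob_valid U i = \sum_(f : {ffun 'I_n -> 'I_n} | ((\sum_j f j) %% n == 0)%N)
     \sum_(s : {perm 'I_n} | stab i s) Pf U f * (Pf U (comp_perm f s))^*.
Proof.
rewrite /prob_valid (eq_bigr _ (fun m _ => fock_probE U i m)).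
rewrite (exchange_big_dep (fun f : {ffun 'I_n -> 'I_n} => ((\sum_j f j) %% n == 0)%N)) /=;
  last by move=> m f Hv /eqP E; rewrite -(valid_occf i) E.
apply: eq_bigr => f Hf.
rewrite (big_pred1 (occf i f)); last first.
  move=> m; rewrite /= [m == _]eq_sym; case: eqP => [<-|]; by rewrite ?andbF ?andbT ?valid_occf.
symmetry.
rewrite (eq_bigr (fun s => \sum_(g | g == comp_perm f s) Pf U f * (Pf U g)^*)); last first.
  by move=> s _; rewrite big_pred1_eq.
rewrite (exchange_big_dep predT) //= [RHS]big_mkcond; apply: eq_bigr => g _.
rewrite sumr_const card_stab.
by case: eqP => _; [rewrite mulr_natr | rewrite mulr0n].
Qed.

Lemma sum_unity (F : fieldType) (x : F) (n : nat) : x ^+ n = 1 ->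
  \sum_(l < n) x ^+ l = if x == 1 then n%:R else 0.
Proof.
move=> xn; case: eqP => [->|/eqP ne].
  by rewrite (eq_bigr (fun _ => 1)) ?sumr_const ?card_ord // => l _; rewrite expr1n.
have : x ^+ n - 1 = 0 by rewrite xn subrr.
rewrite subrX1 => /eqP; rewrite mulf_eq0 subr_eq0 (negbTE ne) /=; by move/eqP.
Qed.

Lemma conjc_omega (R : realType) (n : nat) : conjc (omega R n) = (omega R n)^-1.
Proof. exact: conj_omega. Qed.

Lemma U_conj (R : realType) (n : nat) (l j : 'I_n) :
  (fourierU R n l j)^* = ((Num.sqrt (n%:R : R))^-1)%:C%C * omega R n ^+ (j * l).
Proof.
rewrite -[LHS]/(conjc (fourierU R n l j)) /fourierU rmorphM.
congr (_ * _); first by rewrite /= oppr0.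
rewrite fmorphV rmorphXn.
by rewrite -[X in (X ^+ _)^-1]/(conjc (omega R n)) conjc_omega exprVn invrK.
Qed.

Lemma divr_eq1 (F : fieldType) (x y : F) : y != 0 -> (x / y == 1) = (x == y).
Proof. by move=> nz; rewrite -(inj_eq (mulIf nz)) divfK // mul1r. Qed.

Lemma uu (R : realType) (n : nat) : (0 < n)%N ->
  ((Num.sqrt (n%:R : R))^-1)%:C%C * ((Num.sqrt (n%:R : R))^-1)%:C%C = (n%:R)^-1 :> R[i].
Proof.
move=> n0; rewrite -rmorphM -invfM -expr2 sqr_sqrtr ?ler0n //.
by rewrite fmorphV rmorph_nat.
Qed.

Lemma term_sum (R : realType) (n : nat) (t : nat) (j j' : 'I_n) : (0 < n)%N ->
  \sum_(l < n) omega R n ^+ (l * t) * (fourierU R n l j * (fourierU R n l j')^*) =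
  ((t + j') %% n == j %% n)%N%:R.
Proof.
move=> n0; set w := omega R n.
set u := ((Num.sqrt (n%:R : R))^-1)%:C%C.
have wn0 : w != 0.
  apply/negP => /eqP w0; have := omega_n R n0; rewrite -/w w0 expr0n.
  by rewrite eqn0Ngt n0 /= => /eqP; rewrite eq_sym oner_eq0.
pose x := w ^+ (t + j') / w ^+ j.
have E : forall l : 'I_n, w ^+ (l * t) * (fourierU R n l j * (fourierU R n l j')^*) =
                          u * u * x ^+ l.
  move=> l; rewrite U_conj /fourierU -/w -/u /x exprMn exprVn -!exprM.
  rewrite (mulnC l t) mulnDl exprD; ring.
rewrite (eq_bigr _ (fun l _ => E l)) -mulr_sumr uu // sum_unity; last first.
  by rewrite /x exprMn exprVn -!exprM !(mulnC _ n) !exprM (omega_n R n0) !expr1n invr1 mulr1.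
rewrite /x divr_eq1 ?expf_neq0 // (eq_prim_root_expr (omega_prim R n0)).
by case: eqP => _; rewrite ?mulr0 // mulVf // pnatr_eq0 -lt0n.
Qed.

Lemma prod_ind (C : comNzRingType) (I : finType) (b : I -> bool) :
  \prod_j ((b j)%:R : C) = ([forall j, b j])%:R.
Proof.
case: forallP => H; first by rewrite big1 // => j _; rewrite H.
have [j /negbTE bj] : exists j, ~~ b j.
  by apply/existsP; rewrite -negb_forall; apply/forallP.
by rewrite (bigD1 j) //= bj mul0r.
Qed.

Lemma forall_cond (n : nat) (K : finType) (i : 'I_n -> K) (r : 'I_n)
  (Hr : forall j, j != r -> i r != i j) (s : {perm 'I_n}) (t : 'I_n) :
  stab i s ->
  [forall j : 'I_n, ((t + (s^-1)%g j) %% n == j %% n)%N] = (s == 1%g) && (t == 0 :> nat).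
Proof.
move/forallP => st; apply/forallP/andP => [H|[/eqP -> /eqP ->] j]; last first.
  by rewrite invg1 perm1 add0n.
have sr : (s^-1)%g r = r.
  apply/eqP; apply: contraT => ne; have := Hr _ ne.
  by have := st ((s^-1)%g r); rewrite permKV eq_sym => ->.
have t0 : t = 0 :> nat.
  have := H r; rewrite sr -{2}[nat_of_ord r]add0n eqn_modDr mod0n modn_small //.
  by move/eqP.
split; last by apply/eqP.
apply/eqP; have : (s^-1)%g = 1%g.
  apply/permP => j; rewrite perm1; have := H j.
  by rewrite t0 add0n !modn_small // => /eqP /val_inj.
by move/(congr1 (fun x => x^-1)%g); rewrite invgK invg1.
Qed.

Lemma inner_sum (R : realType) (n : nat) (s : {perm 'I_n}) (t : nat) : (0 < n)%N ->
  \sum_(f : {ffun 'I_n -> 'I_n}) (omega R n ^+ (\sum_j f j)) ^+ t *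
      (Pf (fourierU R n) f * (Pf (fourierU R n) (comp_perm f s))^*) =
  \prod_(j < n) (((t + (s^-1)%g j) %% n == j %% n)%N%:R : R[i]).
Proof.
move=> n0.
transitivity (\prod_(j < n) \sum_(l < n) omega R n ^+ (l * t) *
   (fourierU R n l j * (fourierU R n l ((s^-1)%g j))^*)); last first.
  by apply: eq_bigr => j _; exact: term_sum.
rewrite bigA_distr_bigA /=; apply: eq_bigr => f _.
have P2 : \prod_j (fourierU R n (comp_perm f s j) j)^* =
          \prod_j (fourierU R n (f j) ((s^-1)%g j))^*.
  by rewrite (reindex_inj (@perm_inj _ (s^-1)%g)) /=; apply: eq_bigr => j _; rewrite ffunE permKV.
rewrite /Pf rmorph_prod P2 -exprM big_distrl /= -prodrXr -!big_split /=.
by apply: eq_bigr => j _; rewrite mulrA.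
Qed.

Unset Implicit Arguments.

Theorem theorem5 (R : realType) (n : nat) (K : finType) (i : 'I_n -> K) :
  (exists r : 'I_n, forall j : 'I_n, j != r -> basis_ip R K (i r) (i j) = 0) ->
  prob_valid (fourierU R n) i = (n%:R)^-1.
Proof.
move=> [r Hr0].
have Hr : forall j, j != r -> i r != i j.
  move=> j jr; apply/negP => /eqP e; move: (Hr0 j jr); rewrite /basis_ip e eqxx.
  by move/eqP; rewrite pnatr_eq0.
have n0 : (0 < n)%N by apply: leq_ltn_trans (ltn_ord r).
have nz : (n%:R : R[i]) != 0 by rewrite pnatr_eq0 -lt0n.
rewrite stepA.
transitivity ((n%:R)^-1 * \sum_(s | stab i s) \sum_(t < n)
   \sum_(f : {ffun 'I_n -> 'I_n}) (omega R n ^+ (\sum_j f j)) ^+ t *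
      (Pf (fourierU R n) f * (Pf (fourierU R n) (comp_perm f s))^*)).
  rewrite [in RHS](eq_bigr (fun s => \sum_(f : {ffun 'I_n -> 'I_n}) \sum_(t < n)
      (omega R n ^+ (\sum_j f j)) ^+ t *
      (Pf (fourierU R n) f * (Pf (fourierU R n) (comp_perm f s))^*))); last first.
    by move=> s _; rewrite exchange_big.
  rewrite [in RHS](exchange_big_dep predT) //= mulr_sumr big_mkcond.
  apply: eq_bigr => f _.
  under [in RHS]eq_bigr do rewrite -mulr_suml sum_prim ?omega_prim //.
  case: ifP => _.
    rewrite [in RHS]mulr_sumr; apply: eq_big => s; first by rewrite andbT.
    by move=> _; rewrite mulKf.
  by rewrite big1 ?mulr0 // => s _; rewrite mul0r.
under eq_bigr => s Hs.
  under eq_bigr => t _ do rewrite inner_sum // prod_ind (forall_cond Hr t Hs).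
  over.
rewrite (bigD1 1%g) /=; last by apply/forallP => x; rewrite perm1.
rewrite [X in _ * (_ + X)]big1 ?addr0; last first.
  by move=> s /andP[_ /negbTE ->]; rewrite big1 // => t _.
rewrite (bigD1 (Ordinal n0)) //= eqxx big1 ?addr0 ?mulr1 // => t.
by rewrite -val_eqE /= => /negbTE ->.
Qed.
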